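(* Let $c \ge 1$, let $\{(x_i,y_i)\}_{i=1}^n$ be a data set with $x_i \in \mathbb{R}^m$ and each $y_i \in \{e_1,\dots,e_c\}\subset\mathbb{R}^c$ a one-hot vector. Fix a tree structure, i.e. a finite family of leaves $\ell$ with membership functions $\mu_\ell:\mathbb{R}^m\to\{0,1\}$ such that each $x_i$ has $\mu_\ell(x_i)=1$ for exactly one leaf $\ell$. Let $\mathcal{L}:\mathbb{R}^c\times\mathbb{R}^c\to\mathbb{R}$ be a loss function such that for every leaf $\ell$ containing at least one data point, the weighted mean $v_\ell=\sum_{i=1}^n \mu_\ell(x_i)y_i\big/\sum_{i=1}^n\mu_\ell(x_i)$ minimizes $v\mapsto \sum_{i=1}^n \mu_\ell(x_i)\mathcal{L}(y_i,v)$ over $v\in\mathbb{R}^c$. Let $T\in[0,1]^{c\times c}$ be an invertible noise transition matrix and define the forward-corrected loss $\mathcal{L}_T(y,\hat y)=\mathcal{L}(y,T\hat y)$. Then for each such leaf $\ell$, $T^{-1}v_\ell$ minimizes $v\mapsto\sum_{i=1}^n\mu_\ell(x_i)\mathcal{L}_T(y_i,v)$, and the minimal total loss of the tree structure is unchanged by forward correction: $$\sum_\ell \min_{v\in\mathbb{R}^c}\sum_{i=1}^n \mu_\ell(x_i)\mathcal{L}_T(y_i,v)=\sum_\ell \min_{v\in\mathbb{R}^c}\sum_{i=1}^n \mu_\ell(x_i)\mathcal{L}(y_i,v).$$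
   Context: Here $e_k\in\mathbb{R}^c$ denotes the standard basis (one-hot) vector with a $1$ in coordinate $k$. A decision tree with a fixed structure predicts for $x$ the value $v_\ell$ of the unique leaf $\ell$ with $\mu_\ell(x)=1$; the total loss of the tree is $\sum_\ell\sum_{i=1}^n\mu_\ell(x_i)\mathcal{L}(y_i,v_\ell)$. The transition matrix has entries $T_{a,b}=P(\tilde Y=b\mid Y=a)$, relating true labels $Y$ to observed noisy labels $\tilde Y$. *)

(* Defs.v *)
From mathcomp Require Import all_boot all_order all_algebra.
Set Implicit Arguments. Unset Strict Implicit. Unset Printing Implicit Defensive.
Import Order.TTheory GRing.Theory Num.Theory.
Local Open Scope ring_scope.

Definition is_minimizer (R : realFieldType) (V : Type) (f : V -> R) (v : V) : Prop :=
  forall w, f v <= f w.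

Definition is_min (R : realFieldType) (V : Type) (f : V -> R) (m : R) : Prop :=
  (exists v, f v = m) /\ (forall w, m <= f w).

Definition onehot (R : realFieldType) (c : nat) (k : 'I_c) : 'cV[R]_c :=
  delta_mx k 0.

Definition leaf_loss (R : realFieldType) (n m c : nat) (Lf : finType)
  (mu : Lf -> 'cV[R]_m -> bool) (x : 'I_n -> 'cV[R]_m) (y : 'I_n -> 'cV[R]_c)
  (Lo : 'cV[R]_c -> 'cV[R]_c -> R) (l : Lf) (v : 'cV[R]_c) : R :=
  \sum_(i < n) (mu l (x i))%:R * Lo (y i) v.

Definition leaf_mean (R : realFieldType) (n m c : nat) (Lf : finType)
  (mu : Lf -> 'cV[R]_m -> bool) (x : 'I_n -> 'cV[R]_m) (y : 'I_n -> 'cV[R]_c)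
  (l : Lf) : 'cV[R]_c :=
  (\sum_(i < n) ((mu l (x i))%:R : R))^-1 *: \sum_(i < n) (mu l (x i))%:R *: y i.

Definition fwd_loss (R : realFieldType) (c : nat) (T : 'M[R]_c)
  (Lo : 'cV[R]_c -> 'cV[R]_c -> R) (y yh : 'cV[R]_c) : R :=
  Lo y (T *m yh).

(* Main.v *)
Require Import Defs.
From mathcomp Require Import all_boot all_order all_algebra.
Import Order.TTheory GRing.Theory Num.Theory.
Local Open Scope ring_scope.

Theorem theorem1 (R : realFieldType) (c n m : nat) (Lf : finType)
  (x : 'I_n -> 'cV[R]_m) (y : 'I_n -> 'cV[R]_c)
  (mu : Lf -> 'cV[R]_m -> bool)
  (Lo : 'cV[R]_c -> 'cV[R]_c -> R) (T : 'M[R]_c) :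
  (0 < c)%N ->
  (forall i, exists k : 'I_c, y i = onehot R k) ->
  (forall i, exists! l : Lf, mu l (x i)) ->
  (forall l, (exists i, mu l (x i)) ->
     is_minimizer (leaf_loss mu x y Lo l) (leaf_mean mu x y l)) ->
  (forall a b, 0 <= T a b <= 1) ->
  T \in unitmx ->
  (forall l, (exists i, mu l (x i)) ->
     is_minimizer (leaf_loss mu x y (fwd_loss T Lo) l) (invmx T *m leaf_mean mu x y l))
  /\
  (exists mT m0 : Lf -> R,
     (forall l, is_min (leaf_loss mu x y (fwd_loss T Lo) l) (mT l)) /\
     (forall l, is_min (leaf_loss mu x y Lo l) (m0 l)) /\
     \sum_(l : Lf) mT l = \sum_(l : Lf) m0 l).
Proof.
move=> _ _ _ Hmin _ HT.
have fw : forall l w, leaf_loss mu x y (fwd_loss T Lo) l w = leaf_loss mu x y Lo l (T *m w) by [].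
have TT : forall v : 'cV[R]_c, T *m (invmx T *m v) = v by move=> v; rewrite mulmxA mulmxV ?mul1mx.
have low : forall l w, leaf_loss mu x y Lo l (leaf_mean mu x y l) <= leaf_loss mu x y Lo l w.
  move=> l w; case: (boolP [exists i, mu l (x i)]) => [/existsP ex|/existsPn nex].
    exact: Hmin.
  by rewrite /leaf_loss !big1 // => i _; rewrite (negbTE (nex i)) mul0r.
split.
  move=> l _ w; rewrite !fw TT; exact: low.
exists (fun l => leaf_loss mu x y Lo l (leaf_mean mu x y l)).
exists (fun l => leaf_loss mu x y Lo l (leaf_mean mu x y l)).
split; last split => //.
  move=> l; split; first by exists (invmx T *m leaf_mean mu x y l); rewrite fw TT.
  move=> w; rewrite fw; exact: low.
move=> l; split; first by exists (leaf_mean mu x y l).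
exact: low.
Qed.
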